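(* For any tree $T$ with at least four vertices, $\mu(T)\le\mu'(T)$, with equality only when $T$ is the path $P_4$ on four vertices.
   Context: A leaf is a vertex of degree at most 1. $\mathcal{S}(T)$ is the set of nonempty subsets of $V(T)$ inducing a connected subgraph (subtrees), and $\mu(T)$ is the average cardinality of a set in $\mathcal{S}(T)$. $\mathcal{S}'(T)$ is obtained from $\mathcal{S}(T)$ by adding the empty set and removing the singleton $\{v\}$ for every leaf $v$ (other singletons remain). $\mu'(T)$ is the average cardinality of a set in $\mathcal{S}'(T)$ (the empty set counting with cardinality 0). *)

(* Defs.v *)
From mathcomp Require Import all_boot all_order all_algebra.
Set Implicit Arguments. Unset Strict Implicit. Unset Printing Implicit Defensive.
Import Order.TTheory GRing.Theory Num.Theory.

Definition simple_graph (T : finType) (e : rel T) : Prop :=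
  symmetric e /\ irreflexive e.

Definition induced_connected (T : finType) (e : rel T) (A : {set T}) : bool :=
  [forall x in A, forall y in A,
     connect (fun u v => [&& e u v, u \in A & v \in A]) x y].

Definition num_edges (T : finType) (e : rel T) : nat :=
  #|[set p : T * T | e p.1 p.2]|./2.

Definition is_tree (T : finType) (e : rel T) : Prop :=
  simple_graph e /\ 0 < #|T| /\ induced_connected e [set: T]
  /\ num_edges e = #|T| - 1.

Definition degree (T : finType) (e : rel T) (v : T) : nat := #|[set u | e v u]|.

Definition is_leaf (T : finType) (e : rel T) (v : T) : bool := degree e v <= 1.

Definition subtrees (T : finType) (e : rel T) : {set {set T}} :=
  [set A : {set T} | (A != set0) && induced_connected e A].

Definition subtrees' (T : finType) (e : rel T) : {set {set T}} :=
  (subtrees e :\: [set [set v] | v in [pred v | is_leaf e v]]) :|: [set set0].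

Definition avg_card (T : finType) (F : {set {set T}}) : rat :=
  ((\sum_(A in F) #|A|)%:R / #|F|%:R)%R.

Definition mu (T : finType) (e : rel T) : rat := avg_card (subtrees e).
Definition mu' (T : finType) (e : rel T) : rat := avg_card (subtrees' e).

Definition is_P4 (T : finType) (e : rel T) : Prop :=
  exists f : 'I_4 -> T, bijective f /\
    forall i j : 'I_4, e (f i) (f j) = ((i.+1 == j) || (j.+1 == i)).

(* Main.v *)
Require Import Defs.
From mathcomp Require Import all_boot all_order all_algebra.
From mathcomp Require Import zify ring lra.
Import Order.TTheory GRing.Theory Num.Theory.
Set Implicit Arguments. Unset Strict Implicit. Unset Printing Implicit Defensive.

Lemma deg_sum (T : finType) (e : rel T) :
  \sum_v degree e v = #|[set p : T * T | e p.1 p.2]|.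
Proof.
rewrite -sum1dep_card.
rewrite (eq_bigr (fun v => \sum_(u | e v u) 1)); last first.
  by move=> v _; rewrite /degree sum1dep_card.
rewrite pair_big_dep; exact: eq_bigl.
Qed.

Lemma edges_even (T : finType) (e : rel T) : simple_graph e ->
  exists X, #|[set p : T * T | e p.1 p.2]| = X.*2.
Proof.
case=> sym irr.
exists (\sum_(p : T * T | e p.1 p.2 && (enum_rank p.1 < enum_rank p.2)) 1).
rewrite -sum1dep_card -addnn.
rewrite (bigID (fun p : T * T => enum_rank p.1 < enum_rank p.2)) /=; congr (_ + _).
rewrite (reindex (fun p : T * T => (p.2, p.1))) /=; last first.
  by exists (fun p : T * T => (p.2, p.1)) => -[].
apply: eq_bigl => -[u v] /=; rewrite sym.
case euv: (e u v); rewrite ?andbF //= ?andbT.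
have: u != v by apply/eqP => E; rewrite E irr in euv.
rewrite -(inj_eq enum_rank_inj) => /eqP ne.
have ne' : (enum_rank u : nat) <> enum_rank v by move=> /val_inj.
rewrite -leqNgt ltn_neqAle; case: eqP => //= E; exfalso; exact: ne' E.
Qed.
Lemma dummy : True. Proof. by []. Qed.

Lemma ic_connect (T : finType) (e : rel T) (A : {set T}) x y :
  induced_connected e A -> x \in A -> y \in A ->
  connect (fun u v => [&& e u v, u \in A & v \in A]) x y.
Proof. by move=> /forall_inP H xA yA; move/forall_inP: (H x xA); apply. Qed.

Lemma deg_pos (T : finType) (e : rel T) : is_tree e -> 1 < #|T| ->
  forall v, 0 < degree e v.
Proof.
case=> _ [_ [ic _]] /card_gt1P [x [y [_ _ nxy]]] v.
have [w nwv] : exists w, w != v.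
  by case: (eqVneq x v) => [E|]; [exists y; rewrite -E eq_sym | exists x].
have /connectP [p pth lst] := ic_connect ic (in_setT v) (in_setT w).
case: p pth lst => [|u p] /=; first by move=> _ E; rewrite E eqxx in nwv.
case/andP => /andP [evu _] _ _.
by apply/card_gt0P; exists u; rewrite inE.
Qed.

Lemma sum_bool (T : finType) (P : pred T) : \sum_v (P v : nat) = #|[set v | P v]|.
Proof. by rewrite -sum1dep_card [RHS]big_mkcond; apply: eq_bigr => v _; case: (P v). Qed.

Lemma leaves_ge2 (T : finType) (e : rel T) : is_tree e -> 1 < #|T| ->
  2 <= #|[set v | is_leaf e v]|.
Proof.
move=> tr n2; have dp := deg_pos tr n2.
case: (tr) => sg [_ [_ ne]].
have [X EX] := edges_even sg.
move: ne; rewrite /num_edges EX doubleK => XE.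
have hs := deg_sum e.
have : \sum_(v : T) 2 <= \sum_v (degree e v + is_leaf e v).
  apply: leq_sum => v _; have := dp v; rewrite /is_leaf.
  move=> H; case: (leqP (degree e v) 1) => H2 /=; lia.
rewrite big_split /= hs EX sum_bool sum_nat_const cardT -cardE.
rewrite -mul2n; set n := #|T| in n2 XE *; lia.
Qed.

Lemma path_restrict (T : finType) (e : rel T) (A : {set T}) a q :
  path e a q -> all (fun u => u \in A) (a :: q) ->
  path (fun u v => [&& e u v, u \in A & v \in A]) a q.
Proof.
elim: q a => //= b q IH a /andP [eab pq] /and3P [aA bA aq].
by rewrite eab aA bA /=; apply: IH => //=; rewrite bA.
Qed.

Lemma rm_leaf_conn (T : finType) (e : rel T) x : is_tree e -> is_leaf e x ->
  induced_connected e (~: [set x]).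
Proof.
case=> [[sym irr] [_ [ic _]]] lx.
apply/forall_inP => y yA.
apply/forall_inP => z zA.
have /connectP [p pth lst] := ic_connect ic (in_setT y) (in_setT z).
have pth' : path e y p by apply: sub_path pth => u v /andP [->].
move: lst; case: (shortenP pth') => p' pth'' uq _ lst'.
apply/connectP; exists p'; last by [].
apply: path_restrict => //.
have nx : x \notin y :: p'.
  rewrite in_cons; move: yA; rewrite !inE eq_sym => /negbTE -> /=.
  apply/negP => xp.
  case/splitPr: xp pth'' uq lst' => p1 p2.
  rewrite last_cat /=.
  case: p2 => [|w p3] /=.
    by move=> _ _ E; move: zA; rewrite !inE E eqxx.
  rewrite cat_path /= => /and4P [_ e1 e2 _] uq _.
  have uq2 : uniq ((y :: p1) ++ [:: x, w & p3]) := uq.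
  move: uq2; rewrite cat_uniq => /and3P [_ hs _].
  have nw : last y p1 != w.
    apply: contraNneq hs => E; apply/hasP; exists w; first by rewrite !inE eqxx orbT.
    by rewrite -E mem_last.
  move: lx; rewrite /is_leaf /degree.
  have : [set last y p1; w] \subset [set u | e x u].
    by apply/subsetP => u; rewrite !inE => /orP [] /eqP ->; rewrite // sym.
  move/subset_leq_card; rewrite cards2 nw => H1 H2.
  by have := leq_trans H1 H2.
apply/allP => u uin; rewrite !inE; apply: contraNneq nx => <-; exact: uin.
Qed.

Lemma sum_in_bool (T : finType) (X : {set T}) (P : pred T) :
  \sum_(A in X) (P A : nat) = #|[set A in X | P A]|.
Proof.
rewrite big_mkcond (eq_bigr (fun A => ((A \in X) && P A : nat))); last by move=> A _; case: (A \in X).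
by rewrite sum_bool; apply: eq_card => A; rewrite !inE.
Qed.

Lemma main_count (T : finType) (e : rel T) : is_tree e -> 4 <= #|T| ->
  2 * #|subtrees e| + 2 * #|T| <= \sum_(A in subtrees e) #|A| + 8.
Proof.
move=> tr n4.
have /card_gt1P [a [b [la lb nab]]] : 1 < #|[set v | is_leaf e v]|.
  by apply: leaves_ge2 => //; apply: leq_trans n4.
rewrite !inE in la lb.
set S := subtrees e.
set F := [set: T] |: (~: [set a] |: [set ~: [set b]]).
have ic : induced_connected e [set: T] by case: tr => _ [_ []].
have FS : F \subset S.
  apply/subsetP => A; rewrite !inE => /or3P [] /eqP ->; rewrite ?inE.
  - by rewrite ic andbT; apply/set0Pn; exists a.
  - rewrite rm_leaf_conn // andbT; apply/set0Pn; exists b; by rewrite !inE eq_sym.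
  - rewrite rm_leaf_conn // andbT; apply/set0Pn; exists a; by rewrite !inE.
have nTa : [set: T] != ~: [set a].
  by apply/eqP => /setP /(_ a); rewrite !inE eqxx.
have nab' : ~: [set a] != ~: [set b].
  by apply/eqP => /setP /(_ a); rewrite !inE eqxx; move: nab; rewrite eq_sym => /negbTE ->.
have nTb : [set: T] != ~: [set b].
  by apply/eqP => /setP /(_ b); rewrite !inE eqxx.
have nTF : [set: T] \notin ~: [set a] |: [set ~: [set b]] by rewrite !inE negb_or nTa nTb.
have naF : ~: [set a] \notin [set ~: [set b]] by rewrite !inE.
have cF : #|F| = 3 by rewrite cardsU1 nTF cardsU1 naF cards1.
have sF : \sum_(A in F) #|A| = 3 * #|T| - 2.
  have cC : forall x : T, #|~: [set x]| = #|T| - 1.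
    by move=> x; have := cardsC [set x]; rewrite cards1 => <-; rewrite add1n subSS subn0.
  rewrite big_setU1 //= big_setU1 //= big_set1 cardsT !cC.
  set n := #|T| in n4 *; lia.
have cSF : #|S :\: F| = #|S| - 3 by rewrite cardsD (setIidPr FS) cF.
have split : \sum_(A in S) #|A| = \sum_(A in F) #|A| + \sum_(A in S :\: F) #|A|.
  by rewrite (big_setID F) (setIidPr FS).
have h1 : \sum_(A in S :\: F) 2 <= \sum_(A in S :\: F) (#|A| + (#|A| == 1)).
  apply: leq_sum => A; rewrite !inE => /andP [_ /andP [nA _]].
  have : 0 < #|A| by rewrite card_gt0.
  by case: (#|A|) => [|[|k]].
have h2 : \sum_(A in S :\: F) ((#|A| == 1 : bool) : nat) <= #|T|.
  rewrite (sum_in_bool (S :\: F) (fun A => #|A| == 1)).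
  apply: leq_trans (leq_imset_card (fun x : T => [set x]) T).
  apply: subset_leq_card; apply/subsetP => A; rewrite !inE => /andP [_ /cards1P [x ->]].
  by apply/imsetP; exists x.
move: h1; rewrite big_split /= sum_nat_const cSF => h1.
have SF3 : 3 <= #|S| by rewrite -cF; exact: subset_leq_card FS.
rewrite split sF.
move: h1 h2 SF3 n4.
set s1 := \sum_(i in S :\: F) #|i|.
set s2 := \sum_(i in S :\: F) _.
set n := #|T|; set m := #|S|.
lia.
Qed.

Lemma S'_facts (T : finType) (e : rel T) :
  #|subtrees' e| = (#|subtrees e| - #|[set v | is_leaf e v]|).+1 /\
  \sum_(A in subtrees' e) #|A| + #|[set v | is_leaf e v]| = \sum_(A in subtrees e) #|A| /\
  #|[set v | is_leaf e v]| <= #|subtrees e|.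
Proof.
set S := subtrees e.
set L := [set [set v] | v in [pred v | is_leaf e v]].
have LS : L \subset S.
  apply/subsetP => A /imsetP [v _ ->]; rewrite inE; apply/andP; split.
    by apply/set0Pn; exists v; rewrite inE.
  apply/forall_inP => x; rewrite inE => /eqP ->; apply/forall_inP => y.
  by rewrite inE => /eqP ->; exact: connect0.
have cL : #|L| = #|[set v | is_leaf e v]|.
  by rewrite card_imset; [apply: eq_card => v; rewrite !inE | exact: set1_inj].
have s0 : set0 \notin S :\: L by rewrite in_setD [set0 \in S]inE eqxx andbF.
have -> : subtrees' e = set0 |: (S :\: L) by rewrite /subtrees' setUC.
rewrite cardsU1 s0 cardsD (setIidPr LS) cL; split => //.
rewrite big_setU1 //= cards0 add0n [RHS](big_setID L) (setIidPr LS) /= -cL; split.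
  rewrite addnC; congr (_ + _).
  by rewrite -sum1_card; apply: eq_bigr => A /imsetP [v _ ->]; rewrite cards1.
exact: subset_leq_card LS.
Qed.

Lemma p4_of (T : finType) (e : rel T) (w0 w1 w2 w3 : T) :
  simple_graph e -> #|T| = 4 -> uniq [:: w0; w1; w2; w3] ->
  e w0 w1 -> e w1 w2 -> e w2 w3 -> ~~ e w0 w2 -> ~~ e w0 w3 -> ~~ e w1 w3 ->
  is_P4 e.
Proof.
move=> [sym irr] c4 uq e01 e12 e23 /negbTE n02 /negbTE n03 /negbTE n13.
exists (fun i : 'I_4 => nth w0 [:: w0; w1; w2; w3] i); split.
  apply: inj_card_bij; last by rewrite c4 card_ord.
  by move=> i j /eqP; rewrite nth_uniq // => /eqP /val_inj.
have e10 : e w1 w0 by rewrite sym.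
have e21 : e w2 w1 by rewrite sym.
have e32 : e w3 w2 by rewrite sym.
have n20 : e w2 w0 = false by rewrite sym.
have n30 : e w3 w0 = false by rewrite sym.
have n31 : e w3 w1 = false by rewrite sym.
move=> [[|[|[|[|i]]]] Hi] [[|[|[|[|j]]]] Hj] //=;
  by rewrite ?irr ?e01 ?e12 ?e23 ?e10 ?e21 ?e32 ?n02 ?n03 ?n13 ?n20 ?n30 ?n31.
Qed.

Lemma p4_case (T : finType) (e : rel T) : is_tree e -> #|T| = 4 ->
  #|[set v | is_leaf e v]| = 2 -> is_P4 e.
Proof.
move=> tr c4 cl.
have dp := deg_pos tr (ltac:(by rewrite c4)).
case: (tr) => sg [_ [_ ne]]; case: (sg) => sym irr.
have /card_gt1P [a [b [la lb nab]]] : 1 < #|[set v | is_leaf e v]| by rewrite cl.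
have la0 : is_leaf e a by rewrite inE in la.
have lb0 : is_leaf e b by rewrite inE in lb.
have Lv : [set v | is_leaf e v] = [set a; b].
  apply/eqP; rewrite eq_sym eqEcard cards2 nab cl andbT.
  by apply/subsetP => u; rewrite !inE => /orP [] /eqP ->.
have : #|~: [set a; b]| == 2.
  by have := cardsC [set a; b]; rewrite cards2 nab c4 => [[<-]].
case/cards2P => c [d [ncd Ecd]].
have : c \in ~: [set a; b] by rewrite Ecd !inE eqxx.
have : d \in ~: [set a; b] by rewrite Ecd !inE eqxx orbT.
rewrite !inE !negb_or => /andP [nda ndb] /andP [nca ncb].
have uq : uniq [:: a; b; c; d].
  by rewrite /= !inE !negb_or nab eq_sym nca eq_sym nda eq_sym ncb eq_sym ndb ncd.
have cov : forall u, u \in [:: a; b; c; d].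
  move=> u; case: (boolP (u \in [set a; b])); first by rewrite !inE => /orP [] ->; rewrite ?orbT.
  rewrite -in_setC Ecd !inE => /orP [] ->; by rewrite ?orbT.
have sumE : forall F : T -> nat, \sum_u F u = F a + F b + F c + F d.
  move=> F; rewrite (eq_bigl (fun u => u \in [:: a; b; c; d])); last by move=> u; rewrite cov.
  by rewrite -big_uniq //= !big_cons big_nil addn0 !addnA.
have degE : forall v, degree e v = \sum_u (e v u : nat).
  by move=> v; rewrite sum_bool.
have [X EX] := edges_even sg.
move: ne; rewrite /num_edges EX doubleK c4 => XE.
have hs := deg_sum e; rewrite EX XE sumE !degE !sumE in hs.
move: la0 lb0; rewrite /is_leaf !degE !sumE => la1 lb1.
have nlc : ~~ is_leaf e c by rewrite -(@in_set _ (is_leaf e)) Lv !inE negb_or nca ncb.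
have nld : ~~ is_leaf e d by rewrite -(@in_set _ (is_leaf e)) Lv !inE negb_or nda ndb.
move: nlc nld; rewrite /is_leaf -!ltnNge !degE !sumE => nlc nld.
move: (dp a) (dp b); rewrite !degE !sumE => pa pb.
have H1 := @p4_of T e a c d b sg c4.
have H2 := @p4_of T e a d c b sg c4.
have u1 : uniq [:: a; c; d; b].
  by rewrite /= !inE !negb_or !andbT; repeat (apply/andP; split); by [|rewrite eq_sym].
have u2 : uniq [:: a; d; c; b].
  by rewrite /= !inE !negb_or !andbT; repeat (apply/andP; split); by [|rewrite eq_sym].
move: (H1 u1) (H2 u2) hs la1 lb1 nlc nld pa pb.
rewrite !irr (sym b a) (sym c a) (sym d a) (sym c b) (sym d b) (sym d c).
case: (e a b); case: (e a c); case: (e a d); case: (e b c); case: (e b d); case: (e c d) => //=;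
  by move=> h1 h2; (apply: h1 || apply: h2).
Qed.

Lemma arith_ineq (S' k l : nat) : 2 * (k + l) <= S' + l -> 2 <= l ->
  (S' + l) * k.+1 <= S' * (k + l) /\
  ((S' + l) * k.+1 = S' * (k + l) -> l = 2 /\ S' + l = 2 * (k + l)).
Proof.
move=> h hl.
have [r Er] : exists r, S' = 2 * k + l + r by exists (S' - (2 * k + l)); lia.
have [m Em] : exists m, l = m + 2 by exists (l - 2); lia.
subst; split; first by nia.
move=> E; nia.
Qed.

Unset Implicit Arguments.
Set Strict Implicit.
Set Printing Implicit Defensive.

Theorem mainTheorem6 (T : finType) (e : rel T) :
  is_tree e -> 4 <= #|T| ->
  (mu e <= mu' e)%R /\ (mu e = mu' e -> is_P4 e).
Proof.
move=> tr n4.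
have mc := main_count tr n4.
have [cS' [sS' lN]] := S'_facts e.
have l2 : 2 <= #|[set v | is_leaf e v]| by apply: leaves_ge2 => //; apply: leq_trans n4.
rewrite /mu /mu' /avg_card cS' -sS'.
move: mc l2 lN; rewrite -sS'.
set Sg := \sum_(A in subtrees' e) #|A|.
set l := #|[set v | is_leaf e v]|.
set N := #|subtrees e|.
move=> mc l2 lN.
have [k Ek] : exists k, N = k + l by exists (N - l); lia.
rewrite Ek addnK.
have h : 2 * (k + l) <= Sg + l by rewrite -Ek; lia.
have [ineq eqc] := arith_ineq h l2.
have Np : (0 < (k + l)%:R :> rat)%R by rewrite ltr0n; lia.
have Np' : (0 < k.+1%:R :> rat)%R by rewrite ltr0n.
split.
  rewrite ler_pdivrMr // mulrAC ler_pdivlMr // -!natrM ler_nat; exact: ineq.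
move=> E.
have : ((Sg + l)%:R / (k + l)%:R == Sg%:R / k.+1%:R :> rat)%R by rewrite E.
rewrite eqr_div ?lt0r_neq0 // -!natrM eqr_nat => /eqP /eqc [El ES].
apply: p4_case => //.
move: mc; rewrite Ek ES; lia.
Qed.
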